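(* Let $r, d, m_1, \ldots, m_r$ be positive integers such that $r \geq 4$ and $m_1 + \ldots + m_r = d$. For each $1 \leq i \leq d-1$ define the integer $\lambda(i)$ by $$\overline{i m_1} + \ldots + \overline{i m_r} = \lambda(i)\, d,$$ where for an integer $z$, $\overline{z}\in\{0,\dots,d-1\}$ denotes the remainder of $z$ modulo $d$. Then $$\#\{ i \in \{1,\dots,d-1\} : \lambda(i) = 1 \} < \frac{d-1}{2}.$$ *)

(* Defs.v *)
From mathcomp Require Import all_boot.
Set Implicit Arguments. Unset Strict Implicit. Unset Printing Implicit Defensive.

(* lambda d m i : the integer lambda(i) with
   \sum_j (i * m_j mod d) = lambda(i) * d.  Since \sum_j m_j = d, the sum is
   divisible by d, so lambda(i) is the exact quotient. *)
Definition lambda (r : nat) (d : nat) (m : 'I_r -> nat) (i : nat) : nat :=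
  (\sum_(j < r) ((i * m j) %% d)) %/ d.

Definition count_lambda1 (r d : nat) (m : 'I_r -> nat) : nat :=
  #|[set i : 'I_d | (0 < i) && (lambda d m i == 1)]|.

(* Main.v *)
Require Import Defs.
From mathcomp Require Import all_boot.
From mathcomp Require Import zify.

Lemma S_dvd (r d : nat) (m : 'I_r -> nat) i :
  \sum_(j < r) m j = d -> d %| \sum_(j < r) ((i * m j) %% d).
Proof.
move=> hs; rewrite /dvdn modn_summ -big_distrr /= hs.
by rewrite modnMl.
Qed.

Lemma S_eq (r d : nat) (m : 'I_r -> nat) i :
  \sum_(j < r) m j = d -> \sum_(j < r) ((i * m j) %% d) = lambda d m i * d.
Proof. by move=> hs; rewrite /lambda divnK // S_dvd. Qed.

Lemma key1 (d x i : nat) : 0 < d -> 0 < x -> i <= d.-1 ->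
  d <= (i * x) %% d + ((d.-1 - i) * x) %% d + x.
Proof.
move=> hd hx hi.
have hdv : d %| (i * x) %% d + ((d.-1 - i) * x) %% d + x.
  rewrite /dvdn -modnDml modnDm modnDml.
  have -> : i * x + (d.-1 - i) * x = d.-1 * x.
    by rewrite -mulnDl addnC subnK.
  case: d hd hi => [|d] hd hi //=.
  by rewrite addnC -mulSn modnMr.
apply: dvdn_leq => //; lia.
Qed.

Lemma lam_pair (r d : nat) (m : 'I_r -> nat) i :
  (forall j, 0 < m j) -> \sum_(j < r) m j = d -> 0 < d -> i <= d.-1 ->
  r.-1 <= lambda d m i + lambda d m (d.-1 - i).
Proof.
move=> hm hs hd hi.
have h : r * d <= \sum_(j < r) ((i * m j) %% d + ((d.-1 - i) * m j) %% d + m j).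
  apply: leq_trans (_ : \sum_(j < r) d <= _).
    by rewrite sum_nat_const card_ord.
  by apply: leq_sum => j _; apply: key1.
rewrite !big_split /= hs !S_eq // in h.
rewrite -mulnDl -[X in _ + X]mul1n -mulnDl leq_pmul2r // in h.
lia.
Qed.


Theorem lemma4p6 (r d : nat) (m : 'I_r -> nat) :
  4 <= r ->
  0 < d ->
  (forall j, 0 < m j) ->
  \sum_(j < r) m j = d ->
  (* #{...} < (d-1)/2, stated as 2 * #{...} < d - 1 to stay in nat *)
  2 * count_lambda1 d m < d - 1.
Proof.
move=> hr hd hm hs.
have hd4 : r <= d.
  rewrite -hs -[r in r <= _]card_ord -sum1_card.
  by apply: leq_sum => j _; exact: hm.
set A := [set i : 'I_d | (0 < i) && (lambda d m i == 1)].
have hrev : forall i : 'I_d, nat_of_ord (rev_ord i) = d.-1 - i.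
  by move=> i /=; lia.
have hdisj : forall i : 'I_d, i \in A -> rev_ord i \notin A.
  move=> i; rewrite !inE => /andP [_ /eqP h1]; apply/negP => /andP [_ /eqP h2].
  have hi : i <= d.-1 by have := ltn_ord i; lia.
  have := lam_pair _ _ _ i hm hs hd hi; rewrite -hrev h1 h2; lia.
have hlast : forall i : 'I_d, nat_of_ord i = d.-1 -> i \notin A.
  move=> i hi; rewrite inE; apply/negP => /andP [_ /eqP h1].
  have := lam_pair _ _ _ 0 hm hs hd (leq0n _); rewrite subn0 -hi h1.
  have -> : lambda d m 0 = 0.
    by rewrite /lambda big1 ?div0n // => j _; rewrite mul0n mod0n.
  lia.
have hd1 : d.-1 < d by lia.
set o0 : 'I_d := Ordinal hd.
set o1 : 'I_d := Ordinal hd1.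
have hsub : A :|: (@rev_ord d) @: A \subset ~: [set o0; o1].
  apply/subsetP => x; rewrite in_setU in_setC in_set2 => /orP [hx | /imsetP [y hy ->]].
    apply/negP => /orP [/eqP e | /eqP e].
      by move: hx; rewrite e inE.
    by move: hx; apply/negP; apply: hlast; rewrite e.
  apply/negP => /orP [/eqP e | /eqP e].
    move: hy; apply/negP; apply: hlast.
    by move/(congr1 val): e => /= e; have := ltn_ord y; lia.
  move/(congr1 val): e => /= e.
  by move: hy; rewrite inE => /andP [hy _]; have := ltn_ord y; lia.
have hI : A :&: (@rev_ord d) @: A = set0.
  apply/setP => x; rewrite in_setI in_set0; apply/negP => /andP [hx /imsetP [y hy e]].
  by have := hdisj y hy; rewrite -e hx.
have := subset_leq_card hsub.
rewrite cardsU hI cards0 subn0 card_imset; last exact: rev_ord_inj.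
rewrite [#|~: [set o0; o1]|]cardsCs setCK cards2 card_ord.
have -> : (o0 != o1) by apply/eqP => /(congr1 val) /=; lia.
rewrite /count_lambda1 -/A; lia.
Qed.
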